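(* Let $V$ be a finite set (the vertex set of a graph or hypergraph). A \emph{bad setting} is a pair $(Z,c)$ with $Z\subset V$ and $c$ a coloring of $Z$ (with colors from $\mathbb{N}$); fix a family of bad settings. Let $\mathcal{Z}=\{Z\subset V:\ \exists c \text{ such that } (Z,c) \text{ is a bad setting}\}$, indexed as $\{Z_i\}_{i\in I}$ with $I\subset\mathbb{N}$ finite. For each $i\in I$ let $C_i=\{c: (Z_i,c)\text{ is a bad setting}\}$, and suppose there are integers $0\le k_i<|Z_i|$ and $m_i\ge 1$ such that for every vertex $v\in Z_i$ there is a set $K_{i,v}\subset Z_i\setminus\{v\}$ with $|K_{i,v}|=k_i$ such that every coloring of $K_{i,v}$ extends in at most $m_i$ ways to a coloring $c\in C_i$ of $Z_i$. Put $l_i=|Z_i|-k_i$ and $E=\{l\in\mathbb{N}:\exists i\in I,\ l_i=l\}$. For $l\in E$ and $v\in V$ let $Q_l(v)$ be the set of sets $Z_j\in\mathcal{Z}$ with $v\in Z_j$ and $l_j=l$, and let $d_l=\max_{v\in V}|Q_l(v)|$. Let $\phi_E(x)=1+\sum_{l\in E}x^l$, let $\tau>0$ satisfy $\phi_E(\tau)-\tau\phi_E'(\tau)=0$ (assumed to exist), and set $\gamma=\phi_E'(\tau)$. Then there exists a coloring of $V$ using $\left\lceil \gamma \sup_{i\in I}(d_{l_i}m_i)^{1/l_i}\right\rceil$ colors that avoids all bad settings, i.e. for no $i\in I$ is its restriction to $Z_i$ an element of $C_i$.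
   Context: A coloring of $V$ avoids a bad setting $(Z,c)$ if its restriction to $Z$ is not equal to $c$. *)

(* Defs.v *)
From Stdlib Require Export Reals.
From mathcomp Require Export all_boot.
Set Implicit Arguments. Unset Strict Implicit. Unset Printing Implicit Defensive.

Definition is_coloring (V : finType) (Z : {set V}) (c : {ffun V -> option nat}) : Prop :=
  forall v, (c v != None) = (v \in Z).

(* phi_E(x) = 1 + sum_{l in E} x^l, E given as a duplicate-free list. *)
Definition phiE (E : seq nat) (x : R) : R :=
  Rplus 1 (foldr (fun l a => Rplus (pow x l) a) R0 E).

Definition Rceil (x : R) : Z := (- Int_part (- x))%Z.

Definition Rmax_list (s : seq R) : R := foldr Rmax R0 s.

(* Main.v *)
Require Import Defs.
From Stdlib Require Import Lra ClassicalEpsilon.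
From Stdlib Require Znat.
From Stdlib Require Import Lia.
Set Implicit Arguments. Unset Strict Implicit. Unset Printing Implicit Defensive.

Local Open Scope R_scope.


Lemma Rceil_ge (x : R) : x <= IZR (Rceil x).
Proof.
rewrite /Rceil opp_IZR.
have [H1 _] := base_Int_part (- x). lra.
Qed.

Lemma Rceil_nat (x : R) : 0 < x -> x <= INR (Z.to_nat (Rceil x)).
Proof.
move=> x0; have H := Rceil_ge x.
have Hz : (0 <= Rceil x)%Z.
  apply: BinInt.Z.lt_le_incl; apply: lt_0_IZR; lra.
by rewrite INR_IZR_INZ Znat.Z2Nat.id.
Qed.

Lemma Rmax_list_ge (s : seq R) x : List.In x s -> x <= Rmax_list s.
Proof.
elim: s => [|y s IH] //= [->|H]; first exact: Rmax_l.
apply: Rle_trans (IH H) _; exact: Rmax_r.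
Qed.

Local Close Scope R_scope.

Definition pb (P : Prop) : bool := if excluded_middle_informative P then true else false.
Lemma pbP (P : Prop) : pb P = true <-> P.
Proof. rewrite /pb; case: excluded_middle_informative => // nP; split => //. Qed.

Lemma choice_fun {A B : Type} (P : A -> B -> Prop) :
  (forall x, exists y, P x y) -> exists f, forall x, P x (f x).
Proof.
move=> H; exists (fun x => proj1_sig (constructive_indefinite_description _ (H x))).
move=> x; exact: proj2_sig.
Qed.

Definition restr (V : finType) C (T : {set V}) (f : {ffun V -> 'I_C.+1}) :
  {ffun V -> 'I_C.+1} := [ffun u => if u \in T then f u else ord0].

Definition goodP (V : finType) (bad : {set V} -> {ffun V -> option nat} -> Prop)
  n (Zs : 'I_n -> {set V}) C (S : {set V}) (f : {ffun V -> 'I_C.+1}) : Prop :=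
  (forall u, u \notin S -> f u = ord0) /\
  (forall j, Zs j \subset S -> forall c0, bad (Zs j) c0 ->
     ~ (forall u, u \in Zs j -> c0 u = Some (nat_of_ord (f u)))).

Definition Gs (V : finType) (bad : {set V} -> {ffun V -> option nat} -> Prop) n (Zs : 'I_n -> {set V}) C (S : {set V}) :=
  [set f : {ffun V -> 'I_C.+1} | pb (goodP bad Zs S f)].

Lemma inGs (V : finType) (bad : {set V} -> {ffun V -> option nat} -> Prop) n (Zs : 'I_n -> {set V}) C S f :
  f \in Gs bad Zs C S <-> goodP bad Zs S f.
Proof. by rewrite inE; apply: pbP. Qed.

Lemma good_restr (V : finType) (bad : {set V} -> {ffun V -> option nat} -> Prop) n (Zs : 'I_n -> {set V}) C (S T : {set V})
  (f : {ffun V -> 'I_C.+1}) :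
  goodP bad Zs S f -> T \subset S -> goodP bad Zs T (restr T f).
Proof.
move=> [Hz Hb] TS; split.
  by move=> u uT; rewrite ffunE (negbTE uT).
move=> j jT c0 bc Hag; apply: (Hb j (subset_trans jT TS) c0 bc) => u uj.
by rewrite Hag // ffunE (subsetP jT u uj).
Qed.

Definition colK (V : finType) C (K : {set V}) (g : {ffun V -> 'I_C.+1}) :
  {ffun V -> option nat} := [ffun u => if u \in K then Some (nat_of_ord (g u)) else None].

Lemma colK_col (V : finType) C K (g : {ffun V -> 'I_C.+1}) : is_coloring K (colK K g).
Proof. by move=> u; rewrite ffunE; case: (u \in K). Qed.

Lemma card_bigcup_le (V : finType) n (P : pred 'I_n) (A : 'I_n -> {set V}) :
  #|\bigcup_(i | P i) A i| <= \sum_(i | P i) #|A i|.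
Proof.
elim/big_rec2: _ => [|i y1 y2 _ IH]; first by rewrite cards0.
apply: leq_trans (leq_card_setU _ _) _; exact: leq_add.
Qed.

Lemma count_step (V : finType) (bad : {set V} -> {ffun V -> option nat} -> Prop)
  n (Zs : 'I_n -> {set V}) (m : 'I_n -> nat) C
  (K : 'I_n -> V -> {set V})
  (sf : 'I_n -> V -> {ffun V -> option nat} -> seq {ffun V -> option nat}) :
  (forall i v, v \in Zs i -> K i v \subset Zs i :\ v /\
     forall cK, is_coloring (K i v) cK -> size (sf i v cK) <= m i /\
       forall c0, bad (Zs i) c0 -> (forall u, u \in K i v -> c0 u = cK u) ->
         c0 \in sf i v cK) ->
  forall (S : {set V}) (v : V), v \in S ->
  C.+1 * #|Gs bad Zs C (S :\ v)| <= #|Gs bad Zs C S| +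
    \sum_(i < n | (v \in Zs i) && (Zs i \subset S))
       m i * #|Gs bad Zs C (S :\: (Zs i :\: K i v))|.
Proof.
move=> HK S v vS.
set S' := S :\ v.
have vS' : v \notin S' by rewrite !inE eqxx.
pose X := [set f : {ffun V -> 'I_C.+1} |
   (restr S' f \in Gs bad Zs C S') && [forall u, (u \notin S) ==> (f u == ord0)]].
have H1 : C.+1 * #|Gs bad Zs C S'| <= #|X|.
  pose h := fun p : {ffun V -> 'I_C.+1} * 'I_C.+1 =>
    [ffun u => if u == v then p.2 else p.1 u].
  rewrite mulnC -[in X in _ * X](card_ord C.+1) -cardsT -cardsX.
  rewrite -(card_in_imset (f := h)).
    apply: subset_leq_card; apply/subsetP => f /imsetP [[g a]].
    rewrite in_setX /= => /andP [gG _] ->.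
    have [gz _] := (inGs _ _ _ _).1 gG.
    have Hr : restr S' (h (g, a)) = g.
      apply/ffunP => u; rewrite !ffunE /=.
      case: ifP => uS'.
        by have -> : (u == v) = false by apply/negbTE; apply: contraNneq vS' => <-.
      by rewrite gz // uS'.
    rewrite inE Hr gG /=; apply/forallP => u; apply/implyP => uS.
    rewrite ffunE /=.
    have -> : (u == v) = false by apply/negbTE; apply: contraNneq uS => ->.
    by rewrite gz // !inE negb_and uS orbT.
  move=> [g a] [g' a']; rewrite !in_setX /= => /andP [gG _] /andP [gG' _] E.
  have [gz _] := (inGs _ _ _ _).1 gG.
  have [gz' _] := (inGs _ _ _ _).1 gG'.
  have Ea : a = a' by move/ffunP: E => /(_ v); rewrite !ffunE /= eqxx.
  congr (_, _) => //; apply/ffunP => u; case: (eqVneq u v) => [->|uv].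
    by rewrite gz // gz'.
  by move/ffunP: E => /(_ u); rewrite !ffunE /= (negbTE uv).
pose T i := S :\: (Zs i :\: K i v).
pose c00 : {ffun V -> option nat} := [ffun _ => None].
pose mrg i (g : {ffun V -> 'I_C.+1}) (c0 : {ffun V -> option nat}) : {ffun V -> 'I_C.+1} :=
  [ffun u => if u \in Zs i then (inord (odflt 0 (c0 u)) : 'I_C.+1) else g u].
pose Img i := [set mrg i p.1 (nth c00 (sf i v (colK (K i v) p.1)) p.2)
               | p : {ffun V -> 'I_C.+1} * 'I_(m i) in setX (Gs bad Zs C (T i)) [set: 'I_(m i)]].
have H3 i : #|Img i| <= m i * #|Gs bad Zs C (T i)|.
  by apply: leq_trans (leq_imset_card _ _) _; rewrite cardsX cardsT card_ord mulnC.
have H2 : X \subset Gs bad Zs C S :|: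
            \bigcup_(i | (v \in Zs i) && (Zs i \subset S)) Img i.
  apply/subsetP => f; rewrite inE => /andP [Hr /forallP Hz].
  rewrite in_setU; case: (boolP (f \in \bigcup_(i | (v \in Zs i) && (Zs i \subset S)) Img i)) => nb;
    first by rewrite orbT.
  rewrite orbF; apply/inGs; split.
    by move=> u uS; apply/eqP; exact: (implyP (Hz u) uS).
  have [rz rb] := (inGs _ _ _ _).1 Hr.
  move=> j jS c0 bc Hag; case: (boolP (v \in Zs j)) => vj; last first.
    have jS' : Zs j \subset S'.
      apply/subsetP => u uj; rewrite !inE (subsetP jS u uj) andbT.
      by apply: contraNneq vj => <-.
    apply: (rb j jS' c0 bc) => u uj; rewrite Hag // ffunE (subsetP jS' u uj) //.
  apply: (negP nb); apply/bigcupP; exists j; first by rewrite vj jS.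
  have [HKs HKc] := HK j v vj.
  pose g := restr (T j) f.
  have KT : K j v \subset T j.
    apply/subsetP => u uK; have := subsetP HKs u uK; rewrite !inE => /andP [_ uj].
    by by rewrite uK /= (subsetP jS u uj).
  have TS' : T j \subset S'.
    apply/subsetP => u; rewrite !inE => /andP [H uS]; rewrite uS andbT.
    apply: contra H => /eqP ->; rewrite vj andbT.
    by apply/negP => vK; have := subsetP HKs v vK; rewrite !inE eqxx.
  have [Hsz Hin] := HKc _ (colK_col (K j v) g).
  have c0in : c0 \in sf j v (colK (K j v) g).
    apply: Hin => // u uK.
    have uj : u \in Zs j by have := subsetP HKs u uK; rewrite !inE => /andP [].
    by rewrite Hag // !ffunE uK (subsetP KT u uK).
  have idx_lt : index c0 (sf j v (colK (K j v) g)) < m j.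
    by apply: leq_trans Hsz; rewrite index_mem.
  apply/imsetP; exists (g, Ordinal idx_lt).
    rewrite in_setX in_setT andbT inE; apply/pbP.
    have -> : g = restr (T j) (restr S' f).
      apply/ffunP => u; rewrite !ffunE; case: ifP => // uT.
      by rewrite (subsetP TS' u uT).
    exact: (good_restr ((inGs _ _ _ _).1 Hr) TS').
  apply/ffunP => u; rewrite /mrg /= ffunE nth_index //.
  case: ifP => uj.
    by rewrite Hag //= inord_val.
  rewrite /g ffunE; case: ifP => // uT.
  apply/eqP; apply: (implyP (Hz u)); apply: contraFN uT => uS.
  by rewrite /T !inE uS uj andbF.
apply: leq_trans H1 _; apply: leq_trans (subset_leq_card H2) _.
apply: leq_trans (leq_card_setU _ _) _; rewrite leq_add2l.
apply: leq_trans (card_bigcup_le _ _) _; apply: leq_sum => i _; exact: H3.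
Qed.

From mathcomp Require Import all_order all_algebra.
From mathcomp Require Import Rstruct.
From mathcomp Require Import ring lra zify.
Import Order.TTheory GRing.Theory Num.Theory.
Local Open Scope ring_scope.


Lemma growth (V : finType) (a : {set V} -> R) (beta : R) : 0 <= beta ->
  (forall (S : {set V}) (v : V), v \in S ->
     (forall T : {set V}, T \subset S :\ v -> a T * beta ^+ (#|S :\ v| - #|T|) <= a (S :\ v)) ->
     beta * a (S :\ v) <= a S) ->
  forall S T : {set V}, T \subset S -> a T * beta ^+ (#|S| - #|T|) <= a S.
Proof.
move=> b0 Hstep S; move: {2}#|S| (leqnn #|S|) => s; elim: s S => [|s IH] S HS T TS.
  case: (eqVneq T S) => [->|TSn]; first by rewrite subnn expr0 mulr1.
  have : T \proper S by rewrite properEneq TSn TS.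
  case/properP => _ [v vS _]; move: HS; rewrite leqn0 => /eqP/cards0_eq S0.
  by rewrite S0 inE in vS.
case: (eqVneq T S) => [->|TSn]; first by rewrite subnn expr0 mulr1.
have : T \proper S by rewrite properEneq TSn TS.
case/properP => _ [v vS vT].
have TS' : T \subset S :\ v.
  apply/subsetP => u uT; rewrite !inE (subsetP TS u uT) andbT.
  by apply: contraNneq vT => <-.
have cS : #|S| = (#|S :\ v|).+1 by rewrite (cardsD1 v S) vS.
have HS' : (#|S :\ v| <= s)%N by rewrite -ltnS -cS.
have IH' := IH (S :\ v) HS'.
have := Hstep S v vS IH'.
have := IH' T TS'.
have cT : (#|T| <= #|S :\ v|)%N by apply: subset_leq_card.
rewrite cS subSn // exprS => H1 H2.
apply: le_trans H2.
rewrite mulrCA; apply: ler_wpM2l => //.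
Qed.


Lemma sum_pred1_seq (E : seq nat) (F : nat -> R) x : uniq E -> x \in E ->
  \sum_(ll <- E | x == ll) F ll = F x.
Proof.
move=> uE xE; rewrite big_mkcond (bigD1_seq x) //= eqxx big1 ?addr0 //.
by move=> ll; rewrite eq_sym => /negbTE ->.
Qed.

Lemma group_sum n (l : 'I_n -> nat) (d : nat -> nat) (E : seq nat) (P : pred 'I_n)
  (tau : R) : 0 <= tau -> uniq E -> (forall i, l i \in E) ->
  (forall ll, (#|[set j | P j && (l j == ll)]| <= d ll)%N) ->
  \sum_(i | P i) tau ^+ l i / (d (l i))%:R <= \sum_(ll <- E) tau ^+ ll.
Proof.
move=> t0 uE lE Hd.
rewrite (eq_bigr (fun i => \sum_(ll <- E | l i == ll) tau ^+ ll / (d ll)%:R)); last first.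
  by move=> i _; rewrite sum_pred1_seq.
rewrite (exchange_big_dep predT) //=.
apply: ler_sum => ll _.
rewrite sumr_const.
have Hc : (#|[pred i | P i && (l i == ll)]| <= d ll)%N.
  apply: leq_trans (Hd ll); apply: eq_leq; apply: eq_card => i; by rewrite inE.
move: Hc; set c := #|_| => Hc.
rewrite -[_ *+ c]mulr_natr -mulrA.
case: (posnP (d ll)) => [d0|dp].
  by move: Hc; rewrite d0 leqn0 => /eqP ->; rewrite invr0 mul0r mulr0 exprn_ge0.
apply: ler_piMr; first exact: exprn_ge0.
by rewrite mulrC ler_pdivrMr ?ltr0n // mul1r ler_nat.
Qed.

Lemma analytic n (l m : 'I_n -> nat) (d : nat -> nat) (E : seq nat) (P : pred 'I_n)
  (tau beta gamma M : R) (C : nat) :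
  0 < tau -> 0 < beta -> M = beta * tau -> uniq E -> (forall i, l i \in E) ->
  (forall i, (0 < l i)%N) ->
  (forall i, ((d (l i) * m i)%:R : R) <= M ^+ l i) ->
  (forall ll, (#|[set j | P j && (l j == ll)]| <= d ll)%N) ->
  1 + \sum_(ll <- E) tau ^+ ll = tau * gamma ->
  gamma * M <= C%:R ->
  \sum_(i | P i) (m i)%:R / beta ^+ (l i).-1 <= C%:R - beta.
Proof.
move=> t0 b0 HM uE lE lpos Hlm Hd Hphi HC.
have step i : P i -> (m i)%:R / beta ^+ (l i).-1 <= beta * (tau ^+ l i / (d (l i))%:R).
  move=> Pi.
  have dpos : (0 < d (l i))%N.
    apply: leq_trans (Hd (l i)); apply/card_gt0P; exists i; by rewrite inE Pi eqxx.
  have Hm := Hlm i.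
  have bk : 0 < beta ^+ (l i).-1 by apply: exprn_gt0.
  have dR : 0 < (d (l i))%:R :> R by rewrite ltr0n.
  rewrite ler_pdivrMr //.
  have -> : beta * (tau ^+ l i / (d (l i))%:R) * beta ^+ (l i).-1 = M ^+ l i / (d (l i))%:R.
    rewrite HM -(prednK (lpos i)) /= !exprS exprMn; ring.
  by rewrite ler_pdivlMr // mulrC -natrM.
apply: le_trans (ler_sum _ step) _.
rewrite -mulr_sumr.
apply: le_trans (ler_wpM2l (ltW b0) (group_sum (ltW t0) uE lE Hd)) _.
have -> : \sum_(ll <- E) tau ^+ ll = tau * gamma - 1 by rewrite -Hphi; ring.
have -> : beta * (tau * gamma - 1) = gamma * M - beta by rewrite HM; ring.
by rewrite lerD2r.
Qed.

Lemma foldr_sum (x : R) (s : seq nat) :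
  foldr (fun l a => Rplus (pow x l) a) R0 s = \sum_(ll <- s) x ^+ ll.
Proof. elim: s => [|y s IH]; first by rewrite big_nil. by rewrite big_cons /= IH RpowE. Qed.

Lemma natfact (s L : nat) : (0 < L)%N -> (L <= s.+1)%N -> (s - (s.+1 - L))%N = L.-1.
Proof. lia. Qed.

Lemma realfact (X A Y beta : R) : X * A <= Y + A * (X - beta) -> beta * A <= Y.
Proof. move=> H; rewrite mulrBr (mulrC A X) (mulrC A beta) in H; lra. Qed.

Lemma Rmax_list_in (s : seq R) x : x \in s -> Rle x (Rmax_list s).
Proof.
elim: s => [|y s IH] //=; rewrite in_cons => /orP [/eqP ->|H]; first exact: Rmax_l.
apply: Rle_trans (IH H) _; exact: Rmax_r.
Qed.

Local Close Scope ring_scope.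


Theorem theorem1 (V : finType) (bad : {set V} -> {ffun V -> option nat} -> Prop)
  (n : nat) (Zs : 'I_n -> {set V}) (k m : 'I_n -> nat) (tau gamma : R) :
  (* bad settings (Z, c): c is a coloring of Z *)
  (forall Z0 c, bad Z0 c -> is_coloring Z0 c) ->
  (* {Zs i}_{i in I} is an indexing of the family of sets Z having a bad setting *)
  injective Zs ->
  (forall Z0 : {set V}, (exists c, bad Z0 c) <-> (exists i, Zs i = Z0)) ->
  (forall i, k i < #|Zs i|) ->
  (forall i, 0 < m i) ->
  (forall i v, v \in Zs i ->
     exists K : {set V}, K \subset Zs i :\ v /\ #|K| = k i /\
       forall cK, is_coloring K cK ->
         exists s : seq {ffun V -> option nat}, size s <= m i /\
           forall c, bad (Zs i) c -> (forall u, u \in K -> c u = cK u) -> c \in s) ->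
  let l := fun i => #|Zs i| - k i in
  let E := undup [seq l i | i <- enum 'I_n] in
  let d := fun ll : nat => \max_(v : V) #|[set j | (v \in Zs j) && (l j == ll)]| in
  Rlt 0 tau ->
  derivable_pt_lim (phiE E) tau gamma ->
  Rminus (phiE E tau) (Rmult tau gamma) = R0 ->
  exists col : V -> nat,
    (forall v, col v < Z.to_nat (Rceil (Rmult gamma
        (Rmax_list [seq Rpower (INR (d (l i) * m i)) (Rinv (INR (l i))) | i <- enum 'I_n])))) /\
    forall i c, bad (Zs i) c -> ~ (forall v, v \in Zs i -> c v = Some (col v)).

Proof.
move=> Hcol Hinj HZ Hk Hm HK l E d tau0 Hder Hphi.
have uE : uniq E by apply: undup_uniq.
have lE i : l i \in E by rewrite mem_undup; apply: map_f; rewrite mem_enum.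
have lpos i : (0 < l i)%N by rewrite subn_gt0.
have n0 : (0 < n)%N.
  case: (posnP n) => // n0; exfalso.
  have E0 : E = [::].
    rewrite /E; case Hen: (enum 'I_n) => [|x s] //.
    by have := leq_trans (ltn_ord x) (eq_leq n0).
  rewrite E0 in Hder Hphi.
  have Hd0 : derivable_pt_lim (phiE [::]) tau R0.
    exact: (derivable_pt_lim_const (Rplus 1 R0) tau).
  have g0 := uniqueness_limite _ _ _ _ Hder Hd0.
  rewrite g0 /phiE /= in Hphi. move: Hphi. rewrite Rmult_0_r Rminus_0_r Rplus_0_r. exact: R1_neq_R0.
have [Kf HKf] : exists Kf : 'I_n -> V -> {set V}, forall i v, v \in Zs i ->
    Kf i v \subset Zs i :\ v /\ #|Kf i v| = k i /\
    forall cK, is_coloring (Kf i v) cK ->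
      exists s : seq {ffun V -> option nat}, (size s <= m i)%N /\
        forall c, bad (Zs i) c -> (forall u, u \in Kf i v -> c u = cK u) -> c \in s.
  pose P1 := (fun (p : 'I_n * V) (K : {set V}) => p.2 \in Zs p.1 ->
    K \subset Zs p.1 :\ p.2 /\ #|K| = k p.1 /\
    forall cK, is_coloring K cK ->
      exists s : seq {ffun V -> option nat}, (size s <= m p.1)%N /\
        forall c, bad (Zs p.1) c -> (forall u, u \in K -> c u = cK u) -> c \in s).
  have : forall p, exists y, P1 p y.
    move=> [i v]; rewrite /P1 /=; case: (boolP (v \in Zs i)) => vi; last by exists set0.
    by have [K HK'] := HK i v vi; exists K => _.
  move/choice_fun => [f Hf].
  by exists (fun i v => f (i, v)) => i v vi; apply: (Hf (i, v)).
pose P2 := (fun (p : 'I_n * V * {ffun V -> option nat}) (s : seq {ffun V -> option nat}) =>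
    p.1.2 \in Zs p.1.1 -> is_coloring (Kf p.1.1 p.1.2) p.2 ->
    (size s <= m p.1.1)%N /\
    forall c, bad (Zs p.1.1) c -> (forall u, u \in Kf p.1.1 p.1.2 -> c u = p.2 u) -> c \in s).
have : forall p, exists y, P2 p y.
  move=> [[i v] cK]; rewrite /P2 /=; case: (boolP (v \in Zs i)) => vi; last by exists [::].
  have [_ [_ H]] := HKf i v vi.
  case: (excluded_middle_informative (is_coloring (Kf i v) cK)) => Hc; last by exists [::].
  by have [s Hs] := H cK Hc; exists s.
move/choice_fun => [sf Hsf].
pose sf' i v cK := sf (i, v, cK).
have HK' : forall i v, v \in Zs i -> Kf i v \subset Zs i :\ v /\
     forall cK, is_coloring (Kf i v) cK -> (size (sf' i v cK) <= m i)%N /\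
       forall c0, bad (Zs i) c0 -> (forall u, u \in Kf i v -> c0 u = cK u) ->
         c0 \in sf' i v cK.
  move=> i v vi; have [H1 _] := HKf i v vi; split => // cK Hc.
  exact: (Hsf (i, v, cK) vi Hc).
Local Open Scope ring_scope.
have t0 : 0 < tau by apply/RltP.
set M := Rmax_list _.
have dpos i : (0 < d (l i))%N.
  have : (0 < #|Zs i|)%N by apply: leq_ltn_trans (Hk i).
  case/card_gt0P => u ui.
  rewrite /d; apply: leq_trans (leq_bigmax u); apply/card_gt0P; exists i.
  by rewrite inE ui eqxx.
have elt_le i : Rle (Rpower (INR (d (l i) * m i)) (Rinv (INR (l i)))) M.
  apply: Rmax_list_in; apply/mapP; exists i => //; by rewrite mem_enum.
have elt_pos i : Rlt 0 (Rpower (INR (d (l i) * m i)) (Rinv (INR (l i)))).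
  exact: exp_pos.
have Mpos : Rlt 0 M by apply: Rlt_le_trans (elt_pos (Ordinal n0)) (elt_le _).
have Hlm i : ((d (l i) * m i)%:R : R) <= M ^+ l i.
  rewrite -INRE -RpowE; apply/RleP.
  have xpos : Rlt 0 (INR (d (l i) * m i)).
    by apply: lt_0_INR; apply/ssrnat.ltP; rewrite muln_gt0 dpos Hm.
  have lnz : INR (l i) <> 0 by apply: not_0_INR; move: (lpos i); case: (l i).
  rewrite -Rpower_pow //.
  have -> : INR (d (l i) * m i) =
     Rpower (Rpower (INR (d (l i) * m i)) (Rinv (INR (l i)))) (INR (l i)).
    by rewrite Rpower_mult Rinv_l // Rpower_1.
  apply: Rle_Rpower_l; first exact: pos_INR.
  by split; [apply: elt_pos | apply: elt_le].
have HM0 : 0 < M by apply/RltP.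
have Hphi' : 1 + \sum_(ll <- E) tau ^+ ll = tau * gamma.
  have := Rminus_diag_uniq _ _ Hphi; rewrite /phiE foldr_sum; exact.
have g0 : 0 < gamma.
  have : 0 < tau * gamma.
    rewrite -Hphi'; apply: lt_le_trans (ltr01) _; rewrite lerDl.
    by apply: sumr_ge0 => ll _; apply: exprn_ge0; apply: ltW.
  by rewrite pmulr_rgt0.
have gM0 : 0 < gamma * M by apply: mulr_gt0.
have HCg : Rle (Rmult gamma M) (INR (Z.to_nat (Rceil (Rmult gamma M)))).
  by apply: Rceil_nat; apply/RltP.
move: HCg.
case HC: (Z.to_nat (Rceil (Rmult gamma M))) => [|c] HCg.
  by exfalso; move: HCg => /RleP; rewrite INRE leNgt gM0.
move/RleP: HCg; rewrite INRE => HCg.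
pose beta := M / tau.
have b0 : 0 < beta by apply: divr_gt0.
have HMb : M = beta * tau by rewrite /beta mulrVK // unitfE gt_eqF.
pose a (S : {set V}) : R := (#|Gs bad Zs c S|)%:R.
have Hd v ll : (#|[set j | (v \in Zs j) && (l j == ll)]| <= d ll)%N.
  by rewrite /d; exact: leq_bigmax.
have step : forall (S : {set V}) (v : V), v \in S ->
   (forall T : {set V}, T \subset S :\ v -> a T * beta ^+ (#|S :\ v| - #|T|) <= a (S :\ v)) ->
   beta * a (S :\ v) <= a S.
  move=> S v vS IH.
  have Hc := count_step c HK' vS.
  move: Hc; rewrite -(ler_nat R) natrD natrM natr_sum.
  under eq_bigr => i _ do rewrite natrM.
  rewrite -/(a S) -/(a (S :\ v)) => Hc.
  set A := a (S :\ v).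
  have A0 : 0 <= A by rewrite /A /a ler0n.
  have Hsum : \sum_(i < n | (v \in Zs i) && (Zs i \subset S))
                 (m i)%:R * a (S :\: (Zs i :\: Kf i v))
              <= \sum_(i < n | v \in Zs i) (m i)%:R * (A / beta ^+ (l i).-1).
    rewrite [in X in _ <= X]big_mkcond [in X in X <= _]big_mkcond /=.
    apply: ler_sum => i _.
    have bk : 0 < beta ^+ (l i).-1 by apply: exprn_gt0.
    case: (boolP (v \in Zs i)) => vi //=.
    case: (boolP (Zs i \subset S)) => iS /=; last first.
      by apply: mulr_ge0; [apply: ler0n | apply: divr_ge0 => //; apply: ltW].
    apply: ler_wpM2l; first exact: ler0n.
    have [HKs [Hcard _]] := HKf i v vi.
    have KZ : Kf i v \subset Zs i by apply: subset_trans HKs (subD1set _ _).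
    have DS : Zs i :\: Kf i v \subset S by apply: subset_trans (subsetDl _ _) iS.
    have TS' : S :\: (Zs i :\: Kf i v) \subset S :\ v.
      apply/subsetP => u; rewrite !inE => /andP [H uS]; rewrite uS andbT.
      apply: contra H => /eqP ->; rewrite vi andbT.
      by apply/negP => vK; have := subsetP HKs v vK; rewrite !inE eqxx.
    have c1 : #|Zs i :\: Kf i v| = (#|Zs i| - k i)%N.
      by rewrite cardsD (setIidPr KZ) Hcard.
    have c2 : #|S :\: (Zs i :\: Kf i v)| = (#|S| - (#|Zs i| - k i))%N.
      by rewrite cardsD (setIidPr DS) c1.
    have c3 : #|S| = (#|S :\ v|).+1 by rewrite (cardsD1 v S) vS.
    have c4 : (#|Zs i| <= #|S|)%N by apply: subset_leq_card.
    have c5 := Hk i.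
    have Hcd : (#|S :\ v| - #|S :\: (Zs i :\: Kf i v)|)%N = (l i).-1.
      rewrite c2 c3 /l; apply: natfact; [exact: (lpos i) | by rewrite -c3; apply: leq_trans (leq_subr _ _) c4].
    have := IH _ TS'; rewrite Hcd => H.
    by rewrite ler_pdivlMr.
  have Han := analytic t0 b0 HMb uE lE lpos Hlm (Hd v) Hphi' HCg.
  have Heq : \sum_(i < n | v \in Zs i) (m i)%:R * (A / beta ^+ (l i).-1)
             = A * \sum_(i < n | v \in Zs i) (m i)%:R / beta ^+ (l i).-1.
    by rewrite mulr_sumr; apply: eq_bigr => i _; rewrite mulrCA.
  have H2 := ler_wpM2l A0 Han.
  rewrite Heq in Hsum.
  have H3 := le_trans Hc (lerD (lexx _) (le_trans Hsum H2)).
  exact: (realfact H3).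
have Hgr := growth (ltW b0) step (sub0set [set: V]).
have f0G : [ffun=> ord0] \in Gs bad Zs c set0.
  rewrite inE; apply/pbP; split; first by move=> u _; rewrite ffunE.
  move=> j jS; exfalso; have := Hk j; move: jS; rewrite subset0 => /eqP ->.
  by rewrite cards0.
have a0 : 1 <= a set0 by rewrite /a ler1n card_gt0; apply/set0Pn; exists [ffun=> ord0].
have aT : 0 < a setT.
  apply: lt_le_trans Hgr; apply: mulr_gt0; first by apply: lt_le_trans a0.
  exact: exprn_gt0.
move: aT; rewrite /a ltr0n => /card_gt0P [f fG].
exists (fun v => nat_of_ord (f v)); split; first by move=> v; exact: ltn_ord.
move=> i c0 bc Hag.
have [_ Hb] := (inGs _ _ _ _).1 fG.
exact: (Hb i (subsetT _) c0 bc Hag).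

Qed.
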